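(* Let $(\boldsymbol{x}^1,\boldsymbol{x}^2)\in(\mathbb{T}^3\times\mathbb{T}^3)\setminus\Delta$ with $\boldsymbol{x}^j=(x^j,y^j,z^j)$, and assume $x^1-x^2=0$ and $y^1-y^2=0$. For $\omega_1,\omega_2,\dots\in\Omega_0$ set $\boldsymbol{x}^j_0=\boldsymbol{x}^j$ and $\boldsymbol{x}^j_n=f_{\omega_n}(\boldsymbol{x}^j_{n-1})$, $j=1,2$. Then for any $\varepsilon>0$ and any $\overline{\boldsymbol{x}}\in\mathbb{T}^3$ there exist $N_2\in\mathbb{N}$ and $(\omega_1,\dots,\omega_{N_2})\in\Omega_0^{N_2}$ such that $$\mathrm{dist}_{\mathbb{T}^3}(\boldsymbol{x}^1_{N_2},\overline{\boldsymbol{x}})<\varepsilon\qquad\text{and}\qquad \mathrm{dist}_{\mathbb{T}^3}(\overline{\boldsymbol{x}},\boldsymbol{x}^2_{N_2})=\mathrm{dist}_{\mathbb{T}^3}(\boldsymbol{x}^1,\boldsymbol{x}^2).$$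
   Context: $\mathbb{T}^3=\mathbb{R}^3/(2\pi\mathbb{Z})^3$ with its standard flat distance $\mathrm{dist}_{\mathbb{T}^3}$; $\Delta=\{(\boldsymbol{x}^1,\boldsymbol{x}^2):\boldsymbol{x}^1=\boldsymbol{x}^2\}$. Fix $U>0$ and let $\Omega_0=[-U,U]^3\times[0,2\pi)^3$, with elements $\omega=(\mathsf{A},\mathsf{B},\mathsf{C},\alpha,\beta,\gamma)$. Define maps of $\mathbb{T}^3$: $f_{(\mathsf{A},\alpha)}(x,y,z)=(x+\mathsf{A}\sin(z+\alpha),\ y+\mathsf{A}\cos(z+\alpha),\ z)$, $f_{(\mathsf{B},\beta)}(x,y,z)=(x,\ y+\mathsf{B}\sin(x+\beta),\ z+\mathsf{B}\cos(x+\beta))$, $f_{(\mathsf{C},\gamma)}(x,y,z)=(x+\mathsf{C}\cos(y+\gamma),\ y,\ z+\mathsf{C}\sin(y+\gamma))$, and $f_\omega=f_{(\mathsf{C},\gamma)}\circ f_{(\mathsf{B},\beta)}\circ f_{(\mathsf{A},\alpha)}$. *)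

(* Defs.v *)
From Stdlib Require Import Reals.
Open Scope R_scope.

(* Points of T^3 = R^3/(2 pi Z)^3 are represented by representatives in R^3. *)
Definition pt : Type := (R * R * R)%type.

Definition cong2pi (a b : R) : Prop := exists k : Z, a - b = 2 * PI * IZR k.

Definition teq (p q : pt) : Prop :=
  let '(x1, y1, z1) := p in let '(x2, y2, z2) := q in
  cong2pi x1 x2 /\ cong2pi y1 y2 /\ cong2pi z1 z2.

Definition mod2pi (t : R) : R := t - 2 * PI * IZR (Int_part (t / (2 * PI))).

Definition dcirc (a b : R) : R :=
  Rmin (mod2pi (a - b)) (2 * PI - mod2pi (a - b)).

Definition dist_T3 (p q : pt) : R :=
  let '(x1, y1, z1) := p in let '(x2, y2, z2) := q in
  sqrt (dcirc x1 x2 ^ 2 + dcirc y1 y2 ^ 2 + dcirc z1 z2 ^ 2).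

Record omega : Type := mkOmega {
  oA : R; oB : R; oC : R; oalpha : R; obeta : R; ogamma : R }.

Definition in_Omega0 (U : R) (w : omega) : Prop :=
  -U <= oA w <= U /\ -U <= oB w <= U /\ -U <= oC w <= U /\
  0 <= oalpha w < 2 * PI /\ 0 <= obeta w < 2 * PI /\ 0 <= ogamma w < 2 * PI.

Definition fA (A alpha : R) (p : pt) : pt :=
  let '(x, y, z) := p in (x + A * sin (z + alpha), y + A * cos (z + alpha), z).
Definition fB (B beta : R) (p : pt) : pt :=
  let '(x, y, z) := p in (x, y + B * sin (x + beta), z + B * cos (x + beta)).
Definition fC (C gamma : R) (p : pt) : pt :=
  let '(x, y, z) := p in (x + C * cos (y + gamma), y, z + C * sin (y + gamma)).

Definition f_omega (w : omega) (p : pt) : pt :=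
  fC (oC w) (ogamma w) (fB (oB w) (obeta w) (fA (oA w) (oalpha w) p)).

(* orbit: iter_f ws n p = x_n where x_0 = p, x_n = f_{omega_n}(x_{n-1}),
   with omega_n := ws (n-1) *)
Fixpoint iter_f (ws : nat -> omega) (n : nat) (p : pt) : pt :=
  match n with
  | O => p
  | S m => f_omega (ws m) (iter_f ws m p)
  end.

(* Main.v *)
Require Import Defs.
From Stdlib Require Import Reals.
From Stdlib Require Import Lra Lia ZArith.
Open Scope R_scope.

Lemma trip_eq (a b c a' b' c' : R) : a = a' -> b = b' -> c = c' -> (a, b, c) = (a', b', c').
Proof. intros; subst; reflexivity. Qed.

Lemma per_int (f : R -> R) (Hf : forall x n, f (x + 2 * INR n * PI) = f x) t k :
  f (t + 2 * PI * IZR k) = f t.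
Proof.
  destruct (Z_le_gt_dec 0 k) as [h|h].
  - rewrite <- (Z2Nat.id k) by lia. rewrite <- INR_IZR_INZ.
    replace (t + 2 * PI * INR (Z.to_nat k)) with (t + 2 * INR (Z.to_nat k) * PI) by ring.
    apply Hf.
  - assert (E : IZR k = - INR (Z.to_nat (- k))).
    { rewrite INR_IZR_INZ, Z2Nat.id by lia. rewrite opp_IZR. ring. }
    rewrite <- (Hf (t + 2 * PI * IZR k) (Z.to_nat (- k))). f_equal. rewrite E. ring.
Qed.

Lemma cong_sym a b : cong2pi a b -> cong2pi b a.
Proof. intros [k Hk]. exists (- k)%Z. rewrite opp_IZR. lra. Qed.

Lemma shift_mod (f : R -> R) (Hf : forall x n, f (x + 2 * INR n * PI) = f x) x x1 t :
  cong2pi x x1 -> f (x + mod2pi (t - x1)) = f t.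
Proof.
  intros [j Hj]. unfold mod2pi.
  assert (Ex : x = x1 + 2 * PI * IZR j) by (rewrite <- Hj; ring).
  rewrite Ex.
  set (K := Int_part ((t - x1) / (2 * PI))).
  replace (x1 + 2 * PI * IZR j + (t - x1 - 2 * PI * IZR K)) with (t + 2 * PI * IZR (j - K))
    by (rewrite minus_IZR; ring).
  apply per_int; exact Hf.
Qed.

Lemma mod2pi_range t : 0 <= mod2pi t < 2 * PI.
Proof.
  unfold mod2pi. pose proof PI_RGT_0.
  set (q := t / (2 * PI)).
  assert (Et : t = 2 * PI * q) by (unfold q; field; lra).
  destruct (base_Int_part q) as [h1 h2].
  set (K := IZR (Int_part q)) in *.
  rewrite Et. split; nra.
Qed.

Lemma dcirc_diff a b a' b' : a - b = a' - b' -> dcirc a b = dcirc a' b'.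
Proof. intros H. unfold dcirc. rewrite H. reflexivity. Qed.

Lemma dcirc00 : dcirc 0 0 = 0.
Proof.
  unfold dcirc, mod2pi. pose proof PI_RGT_0.
  replace ((0 - 0) / (2 * PI)) with 0 by (field; lra).
  destruct (base_Int_part 0) as [h1 h2].
  assert (Int_part 0 = 0%Z).
  { apply le_IZR in h1. assert (-1 < IZR (Int_part 0)) by lra.
    apply lt_IZR in H0. lia. }
  rewrite H0. unfold Rmin. destruct (Rle_dec _ _); simpl; lra.
Qed.

Lemma stepB B beta x y z :
  f_omega (mkOmega 0 B 0 0 beta 0) (x, y, z) =
  (x, y + B * sin (x + beta), z + B * cos (x + beta)).
Proof.
  unfold f_omega, fA, fB, fC; simpl. rewrite !Rmult_0_l, !Rplus_0_r. reflexivity.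
Qed.

Lemma stepC C gamma x y z :
  f_omega (mkOmega 0 0 C 0 0 gamma) (x, y, z) =
  (x + C * cos (y + gamma), y, z + C * sin (y + gamma)).
Proof.
  unfold f_omega, fA, fB, fC; simpl. rewrite !Rmult_0_l, !Rplus_0_r. reflexivity.
Qed.

Lemma iter_const w (P : R -> R -> Prop) a b c
  (H : forall x y z, P x y -> f_omega w (x, y, z) = (x + a, y + b, z + c)) x y z
  (HP : forall k : nat, P (x + INR k * a) (y + INR k * b)) :
  forall n, iter_f (fun _ => w) n (x, y, z) = (x + INR n * a, y + INR n * b, z + INR n * c).
Proof.
  induction n.
  - simpl. apply trip_eq; ring.
  - simpl iter_f. rewrite IHn, H by apply HP. apply trip_eq; rewrite S_INR; ring.
Qed.

Lemma iter_shift ws n m p :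
  iter_f ws (n + m) p = iter_f (fun i => ws (n + i)%nat) m (iter_f ws n p).
Proof.
  induction m.
  - rewrite Nat.add_0_r. reflexivity.
  - rewrite Nat.add_succ_r. simpl. rewrite IHm. reflexivity.
Qed.

Lemma iter_ext ws ws' n p : (forall m, (m < n)%nat -> ws m = ws' m) ->
  iter_f ws n p = iter_f ws' n p.
Proof.
  induction n; intros H; simpl; auto.
  rewrite H by lia. rewrite IHn by (intros; apply H; lia). reflexivity.
Qed.

Definition wsch (N : nat) (x1 yb dx dy dz : R) (i : nat) : omega :=
  if Nat.ltb i N then mkOmega 0 (dy / INR N) 0 0 (mod2pi (PI / 2 - x1)) 0
  else if Nat.ltb i (N + N) then mkOmega 0 (dz / INR N) 0 0 (mod2pi (0 - x1)) 0
  else mkOmega 0 0 (dx / INR N) 0 0 (mod2pi (0 - yb)).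

Lemma orbit N x1 y1 z1 xb yb zb x y z (hN : (0 < N)%nat) :
  cong2pi x x1 -> cong2pi y y1 ->
  iter_f (wsch N x1 yb (xb - x1) (yb - y1) (zb - z1)) (N + (N + N)) (x, y, z) =
  (x + (xb - x1), y + (yb - y1), z + (zb - z1)).
Proof.
  intros hx hy.
  set (ws := wsch N x1 yb (xb - x1) (yb - y1) (zb - z1)).
  assert (HN : INR N <> 0) by (apply not_0_INR; lia).
  rewrite iter_shift.
  rewrite (iter_ext _ (fun _ => mkOmega 0 ((yb - y1) / INR N) 0 0 (mod2pi (PI / 2 - x1)) 0) N)
    by (intros m hm; unfold ws, wsch; rewrite (proj2 (Nat.ltb_lt m N) hm); reflexivity).
  rewrite (iter_const _ (fun x' _ => cong2pi x' x1) 0 ((yb - y1) / INR N) 0).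
  2:{ intros x' y' z' hx'. rewrite stepB, (shift_mod sin sin_period _ _ _ hx'),
        (shift_mod cos cos_period _ _ _ hx'), sin_PI2, cos_PI2. apply trip_eq; ring. }
  2:{ intros k. rewrite Rmult_0_r, Rplus_0_r. exact hx. }
  replace (x + INR N * 0, y + INR N * ((yb - y1) / INR N), z + INR N * 0)
    with (x, y + (yb - y1), z) by (apply trip_eq; field; auto).
  rewrite iter_shift. cbv beta.
  rewrite (iter_ext (fun i => ws (N + i)%nat) (fun _ => mkOmega 0 ((zb - z1) / INR N) 0 0 (mod2pi (0 - x1)) 0) N)
    by (intros m hm; unfold ws, wsch;
        rewrite (proj2 (Nat.ltb_ge (N + m) N) ltac:(lia));
        rewrite (proj2 (Nat.ltb_lt (N + m) (N + N)) ltac:(lia)); reflexivity).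
  rewrite (iter_const _ (fun x' _ => cong2pi x' x1) 0 0 ((zb - z1) / INR N)).
  2:{ intros x' y' z' hx'. rewrite stepB, (shift_mod sin sin_period _ _ _ hx'),
        (shift_mod cos cos_period _ _ _ hx'), sin_0, cos_0. apply trip_eq; ring. }
  2:{ intros k. rewrite Rmult_0_r, Rplus_0_r. exact hx. }
  replace (x + INR N * 0, y + (yb - y1) + INR N * 0, z + INR N * ((zb - z1) / INR N))
    with (x, y + (yb - y1), z + (zb - z1)) by (apply trip_eq; field; auto).
  rewrite (iter_ext (fun i => ws (N + (N + i))%nat) (fun _ => mkOmega 0 0 ((xb - x1) / INR N) 0 0 (mod2pi (0 - yb))) N)
    by (intros m hm; unfold ws, wsch;
        rewrite (proj2 (Nat.ltb_ge (N + (N + m)) N) ltac:(lia));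
        rewrite (proj2 (Nat.ltb_ge (N + (N + m)) (N + N)) ltac:(lia)); reflexivity).
  assert (hy' : cong2pi (y + (yb - y1)) yb).
  { destruct hy as [j Hj]. exists j. rewrite <- Hj. ring. }
  rewrite (iter_const _ (fun _ y' => cong2pi y' yb) ((xb - x1) / INR N) 0 0).
  2:{ intros x' y' z' hx'. rewrite stepC, (shift_mod sin sin_period _ _ _ hx'),
        (shift_mod cos cos_period _ _ _ hx'), sin_0, cos_0. apply trip_eq; ring. }
  2:{ intros k. rewrite Rmult_0_r, Rplus_0_r. exact hy'. }
  apply trip_eq; field; auto.
Qed.

Theorem lemma3p8 (U : R) (hU : 0 < U)
  (x1 y1 z1 x2 y2 z2 : R)
  (hoff : ~ teq (x1, y1, z1) (x2, y2, z2))
  (hx : cong2pi x1 x2) (hy : cong2pi y1 y2)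
  (eps : R) (heps : 0 < eps) (xbar : pt) :
  exists (N2 : nat) (ws : nat -> omega),
    (forall n, (n < N2)%nat -> in_Omega0 U (ws n)) /\
    dist_T3 (iter_f ws N2 (x1, y1, z1)) xbar < eps /\
    dist_T3 xbar (iter_f ws N2 (x2, y2, z2)) = dist_T3 (x1, y1, z1) (x2, y2, z2).
Proof.
  destruct xbar as [[xb yb] zb].
  set (M := Rabs (xb - x1) + Rabs (yb - y1) + Rabs (zb - z1)).
  assert (HM : 0 <= M) by (unfold M; pose proof (Rabs_pos (xb - x1));
    pose proof (Rabs_pos (yb - y1)); pose proof (Rabs_pos (zb - z1)); lra).
  destruct (archimed_cor1 (U / (M + 1))) as [N [HN1 HN2]].
  { apply Rdiv_lt_0_compat; lra. }
  assert (HNpos : 0 < INR N) by (apply lt_0_INR; lia).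
  assert (Hr : / INR N * (M + 1) < U).
  { assert (E : U / (M + 1) * (M + 1) = U) by (field; lra).
    rewrite <- E. apply Rmult_lt_compat_r; lra. }
  assert (Hrp : 0 < / INR N) by (apply Rinv_0_lt_compat; lra).
  assert (Hb : forall d, Rabs d <= M -> -U <= d / INR N <= U).
  { intros d hd. unfold Rdiv. pose proof (Rle_abs d). pose proof (Rle_abs (- d)). rewrite Rabs_Ropp in *. split; nra. }
  exists (N + (N + N))%nat, (wsch N x1 yb (xb - x1) (yb - y1) (zb - z1)).
  pose proof PI_RGT_0 as HPI.
  split; [|split].
  - intros n _. unfold wsch, in_Omega0.
    pose proof (mod2pi_range (PI / 2 - x1)). pose proof (mod2pi_range (0 - x1)).
    pose proof (mod2pi_range (0 - yb)).
    assert (h1 : Rabs (xb - x1) <= M) by (unfold M; pose proof (Rabs_pos (yb - y1));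
      pose proof (Rabs_pos (zb - z1)); lra).
    assert (h2 : Rabs (yb - y1) <= M) by (unfold M; pose proof (Rabs_pos (xb - x1));
      pose proof (Rabs_pos (zb - z1)); lra).
    assert (h3 : Rabs (zb - z1) <= M) by (unfold M; pose proof (Rabs_pos (yb - y1));
      pose proof (Rabs_pos (xb - x1)); lra).
    apply Hb in h1; apply Hb in h2; apply Hb in h3.
    destruct (Nat.ltb n N); [|destruct (Nat.ltb n (N + N))]; simpl;
      repeat split; lra.
  - rewrite orbit by (try lia; exists 0%Z; ring).
    unfold dist_T3.
    rewrite (dcirc_diff _ _ 0 0) by ring.
    rewrite (dcirc_diff (y1 + _) _ 0 0) by ring.
    rewrite (dcirc_diff (z1 + _) _ 0 0) by ring.
    rewrite dcirc00. replace (0 ^ 2 + 0 ^ 2 + 0 ^ 2) with 0 by ring.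
    rewrite sqrt_0. exact heps.
  - rewrite orbit by (try lia; apply cong_sym; assumption).
    unfold dist_T3.
    rewrite (dcirc_diff xb _ x1 x2) by ring.
    rewrite (dcirc_diff yb _ y1 y2) by ring.
    rewrite (dcirc_diff zb _ z1 z2) by ring.
    reflexivity.
Qed.
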